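(* Let $\beta\ge0$ and $n>0$ be integers. Then $$C_\beta(n)=\sum_{\substack{d\mid (n+\beta)\\ \beta d<n+\beta}} E(d),$$ where $d$ ranges over positive divisors of $n+\beta$.
   Context: Define on triples of integers $\Gamma_{\beta,1}(\tau_1,\tau_2,\tau_3)=(\tau_2,\tau_3,\tau_2+\tau_3+\beta)$ and $\Gamma_{\beta,2}(\tau_1,\tau_2,\tau_3)=(\tau_1,\tau_3,\tau_1+\tau_3+\beta)$. For integers $\alpha\ge1$, $\beta\ge0$, the $(\alpha,\beta)$-Euclid tree is the set of triples obtained from the root $(\alpha,\alpha,2\alpha+\beta)$ by finitely many (possibly zero) applications of $\Gamma_{\beta,1},\Gamma_{\beta,2}$; $\max T$ is the largest entry of $T$. Define $C_\beta(n)=\#\{T: T\text{ is on the }(\alpha,\beta)\text{-Euclid tree for some integer }\alpha\ge1,\ \max T=n\}+1$ (distinct triples counted). Define $E(1)=1$ and, for $n\ge2$, $E(n)=\#\{T: T\text{ is on the }(1,0)\text{-Euclid tree},\ \max T=n\}$. *)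

(* Defs.v *)
From Stdlib Require Import ClassicalEpsilon.
From mathcomp Require Import all_boot.
Set Implicit Arguments. Unset Strict Implicit. Unset Printing Implicit Defensive.

(* Triples (tau1, tau2, tau3), all entries are positive on an Euclid tree
   with alpha >= 1, beta >= 0, so nat is used. *)
Definition triple := (nat * nat * nat)%type.

Definition Gamma1 (beta : nat) (T : triple) : triple :=
  let: (t1, t2, t3) := T in (t2, t3, t2 + t3 + beta).
Definition Gamma2 (beta : nat) (T : triple) : triple :=
  let: (t1, t2, t3) := T in (t1, t3, t1 + t3 + beta).

Inductive on_tree (alpha beta : nat) : triple -> Prop :=
| on_tree_root : on_tree alpha beta (alpha, alpha, 2 * alpha + beta)
| on_tree_G1 T : on_tree alpha beta T -> on_tree alpha beta (Gamma1 beta T)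
| on_tree_G2 T : on_tree alpha beta T -> on_tree alpha beta (Gamma2 beta T).

Definition tmax (T : triple) : nat := maxn T.1.1 (maxn T.1.2 T.2).

Definition pb (P : Prop) : bool :=
  if excluded_middle_informative P then true else false.

(* number of triples T with max T = n satisfying P; such triples have all
   entries <= n, so enumerating 'I_n.+1 ^3 is exhaustive *)
Definition count_max (P : triple -> Prop) (n : nat) : nat :=
  #|[set T : 'I_n.+1 * 'I_n.+1 * 'I_n.+1 |
      let U : triple := (val T.1.1, val T.1.2, val T.2) in
      pb (P U) && (tmax U == n)]|.

Definition C (beta n : nat) : nat :=
  count_max (fun T => exists alpha, 1 <= alpha /\ on_tree alpha beta T) n + 1.

Definition E (n : nat) : nat :=
  if n == 1 then 1 else count_max (on_tree 1 0) n.

(* Main.v *)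
Require Import Defs.
From Stdlib Require Import ClassicalEpsilon.
From mathcomp Require Import all_boot zify.

Lemma tree_ord a b T : 1 <= a -> on_tree a b T ->
  a <= T.1.1 /\ T.1.1 <= T.1.2 /\ T.1.2 + a + b <= T.2.
Proof.
move=> ha; elim => [|[[t1 t2] t3] _ /= IH|[[t1 t2] t3] _ /= IH] /=; lia.
Qed.

Lemma tree_fwd a b T : on_tree a b T -> exists S, on_tree 1 0 S /\
  T.1.1 + b = (a + b) * S.1.1 /\ T.1.2 + b = (a + b) * S.1.2 /\ T.2 + b = (a + b) * S.2.
Proof.
elim => [|[[t1 t2] t3] _ [[[s1 s2] s3] [HS /= [h1 [h2 h3]]]]|[[t1 t2] t3] _ [[[s1 s2] s3] [HS /= [h1 [h2 h3]]]]].
- exists (1,1,2); split; first exact: on_tree_root. simpl; lia.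
- exists (Gamma1 0 (s1,s2,s3)); split; first exact: on_tree_G1. simpl; nia.
- exists (Gamma2 0 (s1,s2,s3)); split; first exact: on_tree_G2. simpl; nia.
Qed.

Definition scale k b (S : triple) : triple := (k * S.1.1 - b, k * S.1.2 - b, k * S.2 - b).

Lemma tree_bwd a b S : on_tree 1 0 S -> on_tree a b (scale (a + b) b S).
Proof.
elim => [|S' HS IH|S' HS IH].
- rewrite /scale /=. have -> : (a + b) * 1 - b = a by lia.
  have -> : (a + b) * 2 - b = 2 * a + b by lia. exact: on_tree_root.
- have := @tree_ord 1 0 _ isT HS; case: S' HS IH => [[s1 s2] s3] HS IH /= Hp.
  have -> : scale (a + b) b (s2, s3, s2 + s3 + 0) = Gamma1 b (scale (a + b) b (s1, s2, s3)).
    rewrite /scale /=; congr (_,_,_); nia.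
  exact: on_tree_G1.
- have := @tree_ord 1 0 _ isT HS; case: S' HS IH => [[s1 s2] s3] HS IH /= Hp.
  have -> : scale (a + b) b (s1, s3, s1 + s3 + 0) = Gamma2 b (scale (a + b) b (s1, s2, s3)).
    rewrite /scale /=; congr (_,_,_); nia.
  exact: on_tree_G2.
Qed.

Lemma tree_cop S : on_tree 1 0 S -> coprime S.1.1 S.2 /\ coprime S.1.2 S.2.
Proof.
elim => [|[[s1 s2] s3] _ /= [h1 h2]|[[s1 s2] s3] _ /= [h1 h2]] //=; rewrite /coprime addn0.
- rewrite gcdnDl gcdnDr; move: h2; rewrite /coprime => h2; by rewrite [gcdn s3 s2]gcdnC h2.
- rewrite gcdnDl gcdnDr; move: h1; rewrite /coprime => h1; by rewrite [gcdn s3 s1]gcdnC h1.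
Qed.

Lemma pbP (P : Prop) : reflect P (pb P).
Proof. rewrite /pb; case: excluded_middle_informative => h; by constructor. Qed.

Definition key b (T : triple) := (T.2 + b) %/ gcdn (T.1.2 + b) (T.2 + b).

Lemma key_spec b k s2 s3 (T : triple) : 0 < k -> coprime s2 s3 ->
  T.1.2 + b = k * s2 -> T.2 + b = k * s3 -> key b T = s3.
Proof.
move=> hk hc h2 h3; rewrite /key h2 h3 -muln_gcdr (eqP hc) muln1 mulKn //.
Qed.

Lemma card_part_seq (I : finType) (A : {set I}) (kf : I -> nat) (s : seq nat)
  (P : pred nat) : uniq s -> (forall x, x \in A -> (kf x \in s) && P (kf x)) ->
  #|A| = \sum_(d <- s | P d) #|[set x in A | kf x == d]|.
Proof.
move=> us hA.
rewrite -sum1_card.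
transitivity (\sum_(x in A) \sum_(d <- s | P d) (kf x == d : nat)).
  apply: eq_bigr => x xA.
  have e : \sum_(d <- s | P d) (kf x == d : nat) = \sum_(d <- s | P d && (kf x == d)) 1.
    rewrite big_mkcond [RHS]big_mkcond /=; apply: eq_bigr => d _.
    by case: (P d); case: (kf x == d).
  rewrite e sum1_count.
  case/andP: (hA x xA) => hs hp.
  have := count_uniq_mem (kf x) us; rewrite hs /= => hc.
  rewrite -{1}hc; apply: eq_count => d /=.
  case: (eqVneq d (kf x)) => [->|hne]. { by rewrite ?eqxx hp. }
  by rewrite andbF.
rewrite exchange_big /=; apply: eq_bigr => d _.
rewrite -sum1_card big_mkcond [RHS]big_mkcond /=; apply: eq_bigr => x _.
by rewrite inE; case: (x \in A); case: (kf x == d).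
Qed.

Definition U m (T : 'I_m * 'I_m * 'I_m) : triple := (val T.1.1, val T.1.2, val T.2).
Arguments U {m} T.
Definition Ptree b : triple -> Prop := fun T => exists alpha, 1 <= alpha /\ on_tree alpha b T.
Definition Aset b n := [set T : 'I_n.+1 * 'I_n.+1 * 'I_n.+1 |
   pb (Ptree b (U T)) && (tmax (U T) == n)].
Definition fd b n d k (S : 'I_d.+1 * 'I_d.+1 * 'I_d.+1) : 'I_n.+1 * 'I_n.+1 * 'I_n.+1 :=
  (inord (k * val S.1.1 - b), inord (k * val S.1.2 - b), inord (k * val S.2 - b)).

Arguments fd b n {d} k S.

Lemma per_d b n d k : 0 < d -> k * d = n + b -> b < k ->
  #|[set T in Aset b n | key b (U T) == d]| = count_max (on_tree 1 0) d.
Proof.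
move=> hd hkd hbk.
have hk : 0 < k by lia.
set B := [set S : 'I_d.+1 * 'I_d.+1 * 'I_d.+1 | pb (on_tree 1 0 (U S)) && (tmax (U S) == d)].
have -> : count_max (on_tree 1 0) d = #|B| by [].
have inj : {in B &, injective (@fd b n d k)}.
  move=> [[x1 x2] x3] [[y1 y2] y3]; rewrite !inE => /andP[/pbP Hx _] /andP[/pbP Hy _] [e1 e2 e3].
  have := @tree_ord 1 0 _ isT Hx; have := @tree_ord 1 0 _ isT Hy; rewrite /U /= => oy ox.
  have bx1 := ltn_ord x1; have bx2 := ltn_ord x2; have bx3 := ltn_ord x3.
  have by1 := ltn_ord y1; have by2 := ltn_ord y2; have by3 := ltn_ord y3.
  move: (congr1 val e1) (congr1 val e2) (congr1 val e3) => /=.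
  rewrite !inordK; try nia.
  move=> f1 f2 f3; congr (_, _, _); apply: val_inj => /=; nia.
rewrite -(card_in_imset inj); apply: eq_card => T; rewrite !inE.
apply/idP/imsetP.
- case/andP => /andP[/pbP [a [ha Ht]] /eqP Hmax] /eqP Hkey.
  have [S [HS [h1 [h2 h3]]]] := @tree_fwd _ _ _ Ht.
  have [c1 c2] := @tree_cop _ HS.
  have hk' := @key_spec b (a + b) _ _ _ (ltac:(lia)) c2 h2 h3.
  have ot := @tree_ord _ _ _ ha Ht. have os := @tree_ord 1 0 _ isT HS.
  move: Hmax Hkey h1 h2 h3 ot os hk'; case: T {Ht} => [[t1 t2] t3]; case: S HS c1 c2 => [[s1 s2] s3] HS c1 c2.
  rewrite /U /tmax /= => Hmax Hkey h1 h2 h3 ot os hk'.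
  have es3 : s3 = d by rewrite -hk' Hkey.
  clear hk'; subst s3.
  have eka : a + b = k.
    apply/eqP; rewrite -(eqn_pmul2r hd); apply/eqP; lia.
  subst k.
  exists (inord s1, inord s2, inord d).
  + rewrite inE /U /= !inordK; try lia.
    apply/andP; split; first by apply/pbP.
    rewrite /tmax /=; apply/eqP; lia.
  + rewrite /fd /= !inordK; try lia.
    congr (_, _, _); apply: val_inj; rewrite /= inordK; lia.
- case=> S HS ->; rewrite inE in HS; case/andP: HS => /pbP HS /eqP Hm.
  have os := @tree_ord 1 0 _ isT HS.
  have [c1 c2] := @tree_cop _ HS.
  have Ht := @tree_bwd (k - b) b _ HS.
  have e : U (fd b n k S) = scale (k - b + b) b (U S).
    have l1 := ltn_ord S.1.1; have l2 := ltn_ord S.1.2; have l3 := ltn_ord S.2.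
    move: Hm os; rewrite /U /fd /scale /tmax /= => Hm os.
    rewrite !inordK; try nia.
    congr (_, _, _); lia.
  rewrite -e in Ht.
  apply/andP; split; first (apply/andP; split).
  + by apply/pbP; exists (k - b); split; [lia | ].
  + rewrite e; have hkb : k - b + b = k by lia.
    rewrite hkb; move: Hm os; rewrite /tmax /scale /= => Hm os; apply/eqP; nia.
  + rewrite e; have hkb : k - b + b = k by lia.
    rewrite hkb; apply/eqP.
    have hd3 : (U S).2 = d by move: Hm os; rewrite /tmax; lia.
    apply: (etrans _ hd3).
    apply: (@key_spec b k _ _ _ hk c2); rewrite /scale /=; move: os; rewrite /U /= => os; nia.
Qed.

Lemma cm1 : count_max (on_tree 1 0) 1 = 0.
Proof.
rewrite /count_max; apply/eqP; rewrite cards_eq0; apply/eqP/setP => S; rewrite !inE.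
case: (pbP (on_tree 1 0 _)) => //= HS; apply/negbTE; apply/eqP => Hm.
have := @tree_ord 1 0 _ isT HS; move: Hm; rewrite /tmax /=; lia.
Qed.

Lemma sum_ind (s : seq nat) (P : pred nat) k : uniq s -> k \in s -> P k ->
  \sum_(d <- s | P d) (k == d : nat) = 1.
Proof.
move=> us hs hp.
have e : \sum_(d <- s | P d) (k == d : nat) = \sum_(d <- s | P d && (k == d)) 1.
  rewrite big_mkcond [RHS]big_mkcond /=; apply: eq_bigr => d _.
  by case: (P d); case: (k == d).
rewrite e sum1_count.
have := count_uniq_mem k us; rewrite hs /= => hc.
rewrite -[RHS]hc; apply: eq_count => d /=.
case: (eqVneq d k) => [->|hne]; first by rewrite ?eqxx hp.
by rewrite andbF.
Qed.

Theorem lemma3p3 (beta n : nat) (hn : 0 < n) :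
  C beta n = \sum_(d <- divisors (n + beta) | beta * d < n + beta) E d.
Proof.
have hnb : 0 < n + beta by lia.
have -> : C beta n = #|Aset beta n| + 1 by [].
rewrite (@card_part_seq _ (Aset beta n) (fun T => key beta (U T)) (divisors (n + beta))
   (fun d => beta * d < n + beta) (divisors_uniq _)); last first.
  move=> T; rewrite inE => /andP[/pbP [a [ha Ht]] /eqP Hmax].
  have [S [HS [h1 [h2 h3]]]] := @tree_fwd _ _ _ Ht.
  have [c1 c2] := @tree_cop _ HS.
  have hk' := @key_spec beta (a + beta) _ _ _ (ltac:(lia)) c2 h2 h3.
  have ot := @tree_ord _ _ _ ha Ht. have os := @tree_ord 1 0 _ isT HS.
  rewrite hk' -dvdn_divisors //.
  move: Hmax; rewrite /tmax => Hmax.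
  have e : (a + beta) * S.2 = n + beta by lia.
  apply/andP; split; first by apply/dvdnP; exists (a + beta); lia.
  nia.
have -> : \sum_(d <- divisors (n + beta) | beta * d < n + beta)
   #|[set x in Aset beta n | key beta (U x) == d]| =
   \sum_(d <- divisors (n + beta) | beta * d < n + beta) count_max (on_tree 1 0) d.
  rewrite big_seq_cond [RHS]big_seq_cond; apply: eq_bigr => d /andP[hdv hlt].
  rewrite -dvdn_divisors // in hdv.
  have hd : 0 < d by apply: dvdn_gt0 hdv.
  apply: (@per_d beta n d ((n + beta) %/ d)) => //.
    by rewrite divnK.
  have := divnK hdv; nia.
have -> : \sum_(d <- divisors (n + beta) | beta * d < n + beta) E d =
  \sum_(d <- divisors (n + beta) | beta * d < n + beta)
     (count_max (on_tree 1 0) d + (1 == d)).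
  apply: eq_bigr => d _; rewrite /E eq_sym; case: eqP => [<-|_]; first by rewrite cm1.
  by rewrite addn0.
rewrite big_split /= sum_ind //.
- exact: divisors_uniq.
- by rewrite -dvdn_divisors.
- by rewrite /= muln1; lia.
Qed.
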